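(* Let $\alpha\ge4$ and $B>1$. Let $\mathcal{F}=A_n\circ\cdots\circ A_0$ be a deep learning model in which every block $A_i$ is either a basic block or a residual block, with approximate model $\mathcal{F}^\alpha=A_n^\alpha\circ\cdots\circ A_0^\alpha$. Here a basic block is one of: a linear block $A(\mathbf{x})=\mathbf{A}\mathbf{x}+\mathbf{b}$ (approximation $A^\alpha=A$); a ReLU block (coordinatewise $\max(x,0)$, approximated by applying $\tilde r_{\alpha,B}$ coordinatewise); a max-pooling block with kernel size $k_0\le10$ (each output coordinate the max of a window of $k_0^2$ inputs, approximated by applying $\tilde M_{\alpha,k_0^2,B}$ to each window); or a softmax block $A(\mathbf{x})=(\exp(x_i)/\sum_j\exp(x_j))_i$ (approximation $A^\alpha=A$). A residual block is $R(\mathbf{x})=\mathcal{G}(\mathbf{x})+\mathbf{P}\mathbf{x}$, where $\mathcal{G}$ is a composition of basic blocks and $\mathbf{P}$ is a matrix, with approximation $R^\alpha(\mathbf{x})=\mathcal{G}^\alpha(\mathbf{x})+\mathbf{P}\mathbf{x}$, $\mathcal{G}^\alpha$ being the composition of the approximations of the basic blocks of $\mathcal{G}$. Assume that all inputs to all blocks (including the blocks inside residual blocks), in both the original and the approximate model, have infinity norm at most $B$ for every input $\mathbf{x}$ considered. Then there exists a constant $C$, determined only by the model parameters (and independent of $\alpha$), such that $\|\mathcal{F}^\alpha(\mathbf{x})-\mathcal{F}(\mathbf{x})\|_\infty\le C2^{-\alpha}$ for every such input $\mathbf{x}$.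
   Context: Let $p_\alpha$ be a polynomial such that $m_\alpha(a,b)=\frac{(a+b)+(a-b)p_\alpha(a-b)}{2}$ satisfies $|m_\alpha(a,b)-\max(a,b)|\le2^{-\alpha}$ for all $a,b\in[0,1]$. Define $r_\alpha(x)=\frac{x+xp_\alpha(x)}{2}$ and $\tilde r_{\alpha,B}(x)=B\,r_\alpha(x/B)$. Define $M_{\alpha,1}(x_1)=x_1$, $M_{\alpha,2k}(x_1,\dots,x_{2k})=m_\alpha(M_{\alpha,k}(x_1,\dots,x_k),M_{\alpha,k}(x_{k+1},\dots,x_{2k}))$, $M_{\alpha,2k+1}(x_1,\dots,x_{2k+1})=m_\alpha(M_{\alpha,k}(x_1,\dots,x_k),M_{\alpha,k+1}(x_{k+1},\dots,x_{2k+1}))$, and $\tilde M_{\alpha,n,B}(x_1,\dots,x_n)=B'\big(M_{\alpha,n}(\tfrac{x_1}{B'}+0.5,\dots,\tfrac{x_n}{B'}+0.5)-0.5\big)$ with $B'=B/(0.5-(\lceil\log_2 n\rceil-1)2^{-\alpha})$. *)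

(* Defs.v *)
From HB Require Import structures.
From mathcomp Require Import all_boot all_order all_algebra.
From mathcomp Require Import reals sequences exp.
Set Implicit Arguments. Unset Strict Implicit. Unset Printing Implicit Defensive.
Import Order.TTheory GRing.Theory Num.Theory.
Local Open Scope ring_scope.

Section Defs.
Variable R : realType.

Definition normInf n (x : 'cV[R]_n) : R := \big[Num.max/0]_(i < n) `|x i 0|.

(* Basic blocks: linear, ReLU, max-pooling with kernel size k0 (1 <= k0 <= 10),
   whose j-th output is the max over the window (w j 0, ..., w j (k0^2-1))
   of input coordinates, and softmax. *)
Inductive basic : nat -> nat -> Type :=
| BLinear m n (A : 'M[R]_(n, m)) (b : 'cV[R]_n) : basic m n
| BReLU n : basic n n
| BMaxPool p q (k0 : nat) (hk : (0 < k0 <= 10)%N)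
    (w : 'I_q -> 'I_(k0 ^ 2) -> 'I_p) : basic p q
| BSoftmax n : basic n n.

(* nonempty compositions; the first element is applied first *)
Inductive chain (T : nat -> nat -> Type) : nat -> nat -> Type :=
| COne m n (b : T m n) : chain T m n
| CCons m k n (b : T m k) (c : chain T k n) : chain T m n.

Inductive block : nat -> nat -> Type :=
| Basic m n (b : basic m n) : block m n
| Residual m n (G : chain basic m n) (P : 'M[R]_(n, m)) : block m n.

Definition model := chain block.

Fixpoint chain_eval T (f : forall m n, T m n -> 'cV[R]_m -> 'cV[R]_n)
  m n (c : chain T m n) : 'cV[R]_m -> 'cV[R]_n :=
  match c with
  | COne _ _ b => f _ _ b
  | CCons _ _ _ b c' => fun x => chain_eval f c' (f _ _ b x)
  end.

(* ok b x : the inputs of block b (and of its sub-blocks) on input x are fine *)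
Fixpoint chain_ok T (f : forall m n, T m n -> 'cV[R]_m -> 'cV[R]_n)
  (ok : forall m n, T m n -> 'cV[R]_m -> Prop)
  m n (c : chain T m n) : 'cV[R]_m -> Prop :=
  match c with
  | COne _ _ b => fun x => ok _ _ b x
  | CCons _ _ _ b c' => fun x => ok _ _ b x /\ chain_ok f ok c' (f _ _ b x)
  end.

Definition seqmax (s : seq R) : R := foldr Num.max (head 0 s) s.

Definition window p q k0 (w : 'I_q -> 'I_(k0 ^ 2) -> 'I_p) (x : 'cV[R]_p)
  (j : 'I_q) : seq R := [seq x (w j i) 0 | i <- enum 'I_(k0 ^ 2)].

Definition softmax n (x : 'cV[R]_n) : 'cV[R]_n :=
  \col_i (expR (x i 0) / \sum_(j < n) expR (x j 0)).

Definition basic_eval m n (b : basic m n) : 'cV[R]_m -> 'cV[R]_n :=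
  match b with
  | BLinear _ _ A c => fun x => A *m x + c
  | BReLU _ => fun x => \col_i Num.max (x i 0) 0
  | BMaxPool _ _ k0 _ w => fun x => \col_j seqmax (window w x j)
  | BSoftmax _ => fun x => softmax x
  end.

Definition block_eval m n (b : block m n) : 'cV[R]_m -> 'cV[R]_n :=
  match b with
  | Basic _ _ b => basic_eval b
  | Residual _ _ G P => fun x => chain_eval basic_eval G x + P *m x
  end.

Definition model_eval m n (F : model m n) := chain_eval block_eval F.

Variable pa : nat -> {poly R}.

Definition m_alpha (a : nat) (x y : R) : R :=
  ((x + y) + (x - y) * (pa a).[x - y]) / 2.

Definition r_alpha (a : nat) (x : R) : R := (x + x * (pa a).[x]) / 2.

Definition rt_alpha (a : nat) (B x : R) : R := B * r_alpha a (x / B).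

Fixpoint Mtree (a : nat) (fuel : nat) (s : seq R) : R :=
  match fuel with
  | 0%N => head 0 s
  | fuel'.+1 =>
      if (size s <= 1)%N then head 0 s
      else m_alpha a (Mtree a fuel' (take (size s)./2 s))
                     (Mtree a fuel' (drop (size s)./2 s))
  end.

Definition M_alpha (a : nat) (s : seq R) : R := Mtree a (size s) s.

(* tilde M_{alpha,n,B}, with ceil(log2 n) = up_log 2 n *)
Definition Mt_alpha (a n : nat) (B : R) (s : seq R) : R :=
  let B' := B / (2^-1 - ((up_log 2 n)%:R - 1) * 2 ^- a) in
  B' * (M_alpha a [seq y / B' + 2^-1 | y <- s] - 2^-1).

Definition basic_approx (a : nat) (B : R) m n (b : basic m n)
  : 'cV[R]_m -> 'cV[R]_n :=
  match b with
  | BLinear _ _ A c => fun x => A *m x + c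
  | BReLU _ => fun x => \col_i rt_alpha a B (x i 0)
  | BMaxPool _ _ k0 _ w => fun x => \col_j Mt_alpha a (k0 ^ 2) B (window w x j)
  | BSoftmax _ => fun x => softmax x
  end.

Definition block_approx (a : nat) (B : R) m n (b : block m n)
  : 'cV[R]_m -> 'cV[R]_n :=
  match b with
  | Basic _ _ b => basic_approx a B b
  | Residual _ _ G P => fun x => chain_eval (basic_approx a B) G x + P *m x
  end.

Definition model_approx (a : nat) (B : R) m n (F : model m n) :=
  chain_eval (block_approx a B) F.

Definition basic_ok (B : R) m n (b : basic m n) (x : 'cV[R]_m) : Prop :=
  normInf x <= B.

Definition block_ok_exact (B : R) m n (b : block m n) : 'cV[R]_m -> Prop :=
  match b with
  | Basic _ _ _ => fun x => normInf x <= B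
  | Residual _ _ G _ => fun x => chain_ok basic_eval (basic_ok B) G x
  end.

Definition block_ok_approx (a : nat) (B : R) m n (b : block m n)
  : 'cV[R]_m -> Prop :=
  match b with
  | Basic _ _ _ => fun x => normInf x <= B
  | Residual _ _ G _ => fun x => chain_ok (basic_approx a B) (basic_ok B) G x
  end.

Definition inputs_bounded_exact (B : R) m n (F : model m n) x :=
  chain_ok block_eval (block_ok_exact B) F x.

Definition inputs_bounded_approx (a : nat) (B : R) m n (F : model m n) x :=
  chain_ok (block_approx a B) (block_ok_approx a B) F x.

End Defs.

(* Main.v *)
Require Import Defs.
From HB Require Import structures.
From mathcomp Require Import all_boot all_order all_algebra.
From mathcomp Require Import reals sequences exp.
From mathcomp Require Import ring lra zify.
Import Order.TTheory GRing.Theory Num.Theory.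
Set Implicit Arguments. Unset Strict Implicit. Unset Printing Implicit Defensive.
Local Open Scope ring_scope.


Section S.
Variable R : realType.

Lemma normInf_ge0 n (x : 'cV[R]_n) : 0 <= normInf x.
Proof.
rewrite /normInf; elim/big_ind: _ => //.
by move=> u v hu hv; rewrite le_max hu.
Qed.

Lemma normInf_coord n (x : 'cV[R]_n) i : `|x i 0| <= normInf x.
Proof. exact: le_bigmax. Qed.

Lemma normInf_le n (x : 'cV[R]_n) c : 0 <= c -> (forall i, `|x i 0| <= c) ->
  normInf x <= c.
Proof. by move=> c0 h; apply: bigmax_le. Qed.

Lemma normInf_sub n (x y : 'cV[R]_n) i : `|x i 0 - y i 0| <= normInf (x - y).
Proof. by have := normInf_coord (x - y) i; rewrite !mxE. Qed.

Lemma max_lip (a b c d del : R) : `|a - c| <= del -> `|b - d| <= del ->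
  `|Num.max a b - Num.max c d| <= del.
Proof.
rewrite !ler_norml => /andP[h1 h2] /andP[h3 h4].
rewrite !maxEle; case: ifP => h5; case: ifP => h6; apply/andP; split; lra.
Qed.

Definition Kmat m n (A : 'M[R]_(n, m)) : R := \sum_i \sum_j `|A i j|.

Lemma Kmat_ge0 m n (A : 'M[R]_(n, m)) : 0 <= Kmat A.
Proof. by apply: sumr_ge0 => i _; apply: sumr_ge0. Qed.

Lemma normInf_mul m n (A : 'M[R]_(n, m)) v :
  normInf (A *m v) <= Kmat A * normInf v.
Proof.
apply: normInf_le; first by apply: mulr_ge0; [apply: Kmat_ge0|apply: normInf_ge0].
move=> i; rewrite mxE.
apply: le_trans (ler_norm_sum _ _ _) _.
apply: le_trans (_ : \sum_j `|A i j| * normInf v <= _).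
  apply: ler_sum => j _; rewrite normrM; apply: ler_wpM2l => //.
  exact: normInf_coord.
rewrite -mulr_suml; apply: ler_wpM2r; first exact: normInf_ge0.
rewrite /Kmat (bigD1 i) //= lerDl; by apply: sumr_ge0 => k _; apply: sumr_ge0.
Qed.

Lemma normInf_add n (x y : 'cV[R]_n) : normInf (x + y) <= normInf x + normInf y.
Proof.
apply: normInf_le; first by apply: addr_ge0; apply: normInf_ge0.
move=> i; rewrite mxE; apply: le_trans (ler_normD _ _) _.
by apply: lerD; apply: normInf_coord.
Qed.


Definition bnd m n (K E : R) (f : 'cV[R]_m -> 'cV[R]_n) (f' : nat -> 'cV[R]_m -> 'cV[R]_n)
  (ok : 'cV[R]_m -> Prop) (ok' : nat -> 'cV[R]_m -> Prop) :=
  [/\ 0 <= K, 0 <= E & forall a, (4 <= a)%N -> forall x x', ok x -> ok' a x' ->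
     normInf (f' a x' - f x) <= K * normInf (x' - x) + E * 2 ^- a].

Lemma chain_bnd (T : nat -> nat -> Type)
  (f : forall m n, T m n -> 'cV[R]_m -> 'cV[R]_n)
  (f' : nat -> forall m n, T m n -> 'cV[R]_m -> 'cV[R]_n)
  (ok : forall m n, T m n -> 'cV[R]_m -> Prop)
  (ok' : nat -> forall m n, T m n -> 'cV[R]_m -> Prop) :
  (forall m n (b : T m n), exists K E, bnd K E (f m n b) (fun a => f' a m n b)
       (ok m n b) (fun a => ok' a m n b)) ->
  forall m n (c : chain T m n), exists K E,
    bnd K E (chain_eval f c) (fun a => chain_eval (f' a) c)
       (chain_ok f ok c) (fun a => chain_ok (f' a) (ok' a) c).
Proof.
move=> H m n c; elim: c => [m' n' b|m' k n' b c IH]; first exact: H.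
have [K1 [E1 [K10 E10 h1]]] := H _ _ b.
have [K2 [E2 [K20 E20 h2]]] := IH.
exists (K2 * K1), (K2 * E1 + E2); split.
- exact: mulr_ge0.
- by apply: addr_ge0 => //; apply: mulr_ge0.
move=> a a4 x x' /= [ok1 ok2] [ok1' ok2'].
apply: le_trans (h2 a a4 _ _ ok2 ok2') _.
have := h1 a a4 _ _ ok1 ok1' => /(ler_wpM2l K20) h.
have -> : K2 * K1 * normInf (x' - x) + (K2 * E1 + E2) * 2 ^- a =
  K2 * (K1 * normInf (x' - x) + E1 * 2 ^- a) + E2 * 2 ^- a by ring.
by rewrite lerD2r.
Qed.

End S.


Section T.
Variable R : realType.
Variable pa : nat -> {poly R}.
Hypothesis hp : forall (a : nat) (x y : R), 0 <= x <= 1 -> 0 <= y <= 1 ->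
          `|m_alpha pa a x y - Num.max x y| <= 2 ^- a.
Variable B : R.
Hypothesis hB : 1 < B.

Lemma e_gt0 a : 0 < 2 ^- a :> R.
Proof. by rewrite invr_gt0 exprn_gt0. Qed.

Lemma e_le a : (4 <= a)%N -> 2 ^- a <= 16^-1 :> R.
Proof.
move=> a4; rewrite -exprVn.
have -> : 16^-1 = (2^-1)^+4 :> R by rewrite !exprS expr0 mulr1 -!invfM; congr (_^-1); ring.
apply: ler_wiXn2l => //; lra.
Qed.

Lemma r_err a t : `|t| <= 1 -> `|r_alpha pa a t - Num.max t 0| <= 2 ^- a.
Proof.
rewrite ler_norml => /andP[t1 t2].
have [t0|t0] := leP 0 t.
  have := @hp a t 0; rewrite /m_alpha /r_alpha addr0 subr0 (max_l t0) => h.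
  apply: h; lra.
have := @hp a 0 (-t); rewrite /m_alpha /r_alpha add0r sub0r opprK.
rewrite max_r; last lra.
have -> : (t + t * (pa a).[t]) / 2 - 0 = (- t + t * (pa a).[t]) / 2 - - t by field.
move=> h; apply: h; lra.
Qed.

Lemma relu_bnd n : exists K E, bnd K E (basic_eval (BReLU R n))
   (fun a => basic_approx pa a B (BReLU R n)) (basic_ok B (BReLU R n))
   (fun a => basic_ok B (BReLU R n)).
Proof.
have B0 : 0 < B by apply: lt_trans hB.
exists 1, B; split; [exact: ler01|exact: ltW|].
move=> a a4 x x' /= ok ok'.
apply: normInf_le.
  by apply: addr_ge0; [rewrite mul1r normInf_ge0|apply: mulr_ge0; [lra|exact/ltW/e_gt0]].
move=> i; rewrite !mxE /rt_alpha.
have hx' : `|x' i 0| <= B by apply: le_trans (normInf_coord _ _) ok'.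
have -> : B * r_alpha pa a (x' i 0 / B) - Num.max (x i 0) 0 =
  B * (r_alpha pa a (x' i 0 / B) - Num.max (x' i 0 / B) 0) +
  (Num.max (x' i 0) 0 - Num.max (x i 0) 0).
  rewrite mulrBr maxr_pMr; last lra.
  rewrite mulr0 [B * (_ / B)]mulrC divfK; last by rewrite gt_eqF.
  ring.
apply: le_trans (ler_normD _ _) _; rewrite mul1r [X in _ <= X]addrC; apply: lerD; last first.
  apply: max_lip; last by rewrite subrr normr0 normInf_ge0.
  by have := normInf_coord (x' - x) i; rewrite !mxE.
rewrite normrM gtr0_norm //.
apply: ler_wpM2l; first exact: ltW.
apply: r_err; rewrite normrM normfV (gtr0_norm B0).
by rewrite ler_pdivrMr // mul1r.
Qed.

Lemma lin_bnd m n (A : 'M[R]_(n, m)) c : exists K E, bnd K E (basic_eval (BLinear A c))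
   (fun a => basic_approx pa a B (BLinear A c)) (basic_ok B (BLinear A c))
   (fun a => basic_ok B (BLinear A c)).
Proof.
exists (Kmat A), 0; split => //; first exact: Kmat_ge0.
move=> a a4 x x' /= _ _.
rewrite mul0r addr0 opprD addrACA subrr addr0 -mulmxBr.
exact: normInf_mul.
Qed.

Lemma expR_lip (u v : R) : `|u| <= B -> `|v| <= B ->
  `|expR u - expR v| <= expR B * `|u - v|.
Proof.
move=> hu hv.
have key : forall p q : R, `|p| <= B -> expR p - expR q <= expR B * `|p - q|.
  move=> p q hp'.
  have := ler_wpM2l (expR_ge0 p) (expR_ge1Dx (q - p)).
  rewrite -expRD (addrC p) subrK mulrDr mulr1 => h.
  have h2 : expR p * (p - q) <= expR B * `|p - q|.
    apply: le_trans (_ : expR p * `|p - q| <= _).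
      by apply: ler_wpM2l; [exact: expR_ge0|exact: ler_norm].
    apply: ler_wpM2r => //; rewrite ler_expR.
    by move: hp'; rewrite ler_norml => /andP[].
  have -> : expR p - expR q = expR p * (p - q) + (expR p + expR p * (q - p) - expR q) by ring.
  rewrite -[X in _ <= X]addr0; apply: lerD => //; lra.
rewrite ler_norml; apply/andP; split; last exact: key.
rewrite lerNl opprB distrC; exact: key.
Qed.

Lemma sum_ge_term n (f : 'I_n -> R) i : (forall j, 0 <= f j) -> f i <= \sum_j f j.
Proof.
by move=> h; rewrite (bigD1 i) //= lerDl; apply: sumr_ge0 => j _.
Qed.

Lemma softmax_bnd n : exists K E, bnd K E (basic_eval (BSoftmax R n))
   (fun a => basic_approx pa a B (BSoftmax R n)) (basic_ok B (BSoftmax R n))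
   (fun a => basic_ok B (BSoftmax R n)).
Proof.
have B0 : 0 < B by apply: lt_trans hB.
set eB := expR B.
have eB0 : 0 < eB := expR_gt0 B.
have c0 : 0 <= (1 + n%:R) * eB * eB.
  by rewrite !mulr_ge0 // ?addr_ge0 // ltW.
exists ((1 + n%:R) * eB * eB), 0; split => //.
move=> a a4 x x' /= ok ok'.
rewrite mul0r addr0.
set d := normInf (x' - x).
have d0 : 0 <= d by apply: normInf_ge0.
apply: normInf_le; first by apply: mulr_ge0.
move=> i; rewrite !mxE.
set s := \sum_j expR (x j 0); set s' := \sum_j expR (x' j 0).
have hx : forall j, `|x j 0| <= B by move=> j; apply: le_trans (normInf_coord _ _) ok.
have hx' : forall j, `|x' j 0| <= B by move=> j; apply: le_trans (normInf_coord _ _) ok'.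
have as_ : expR (x i 0) <= s by apply: sum_ge_term => j; exact: expR_ge0.
have as' : expR (x' i 0) <= s' by apply: sum_ge_term => j; exact: expR_ge0.
have s0 : 0 < s by apply: lt_le_trans as_; exact: expR_gt0.
have s'0 : 0 < s' by apply: lt_le_trans as'; exact: expR_gt0.
have is' : s'^-1 <= eB.
  rewrite -div1r ler_pdivrMr //.
  apply: le_trans (_ : eB * expR (- B) <= _); first by rewrite expRxMexpNx_1.
  apply: ler_wpM2l; first exact: ltW.
  apply: le_trans as'; rewrite ler_expR.
  by have := hx' i; rewrite ler_norml => /andP[].
have is'0 : 0 <= s'^-1 by rewrite invr_ge0 ltW.
have q1 : expR (x i 0) / s <= 1 by rewrite ler_pdivrMr // mul1r.
have q0 : 0 <= expR (x i 0) / s by apply: divr_ge0; [exact: expR_ge0|exact: ltW].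
have hd : forall j, `|x' j 0 - x j 0| <= d by move=> j; exact: normInf_sub.
have ha : `|expR (x' i 0) - expR (x i 0)| <= eB * d.
  apply: le_trans (expR_lip (hx' i) (hx i)) _.
  by apply: ler_wpM2l; [exact: ltW|].
have hs : `|s - s'| <= n%:R * (eB * d).
  rewrite /s /s' -sumrB.
  apply: le_trans (ler_norm_sum _ _ _) _.
  apply: le_trans (_ : \sum_(j < n) eB * d <= _).
    apply: ler_sum => j _; apply: le_trans (expR_lip (hx j) (hx' j)) _.
    by apply: ler_wpM2l; [exact: ltW|]; rewrite distrC.
  by rewrite sumr_const card_ord mulr_natl.
have -> : expR (x' i 0) / s' - expR (x i 0) / s =
  (expR (x' i 0) - expR (x i 0)) * s'^-1 + (expR (x i 0) / s) * (s - s') * s'^-1.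
  field; apply/andP; split; exact: lt0r_neq0.
apply: le_trans (ler_normD _ _) _.
move: q0 q1; set q := expR (x i 0) / s => q0 q1.
rewrite !normrM (ger0_norm is'0) (ger0_norm (expR_ge0 _)) normfV (gtr0_norm s0).
have t1 : `|expR (x' i 0) - expR (x i 0)| * s'^-1 <= eB * d * eB.
  by apply: ler_pM => //; exact: normr_ge0.
have t2 : q * `|s - s'| * s'^-1 <= n%:R * (eB * d) * eB.
  apply: ler_pM => //; first by apply: mulr_ge0.
  rewrite -[X in _ <= X]mul1r; apply: ler_pM => //.
have -> : (1 + n%:R) * eB * eB * d = eB * d * eB + n%:R * (eB * d) * eB by ring.
exact: lerD.
Qed.

End T.


Section U.
Variable R : realType.

Lemma foldr_max_ub (z : R) s x : x \in z :: s -> x <= foldr Num.max z s.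
Proof.
elim: s x => [|y t IH] x /=; first by rewrite inE => /eqP ->.
rewrite !inE le_max => /orP[/eqP->|/orP[/eqP->|h]].
- by apply/orP; right; apply: IH; rewrite inE eqxx.
- by rewrite lexx.
- by apply/orP; right; apply: IH; rewrite inE h orbT.
Qed.

Lemma foldr_max_in (z : R) s : foldr Num.max z s \in z :: s.
Proof.
elim: s => [|y t IH] /=; first by rewrite inE eqxx.
rewrite maxEle; case: ifP => _; last by rewrite !inE eqxx orbT.
by move: IH; rewrite !inE => /orP[->|->]; rewrite ?orbT.
Qed.

Lemma seqmax_ub (s : seq R) x : x \in s -> x <= seqmax s.
Proof. by move=> h; apply: foldr_max_ub; rewrite inE h orbT. Qed.

Lemma seqmax_in (s : seq R) : s != [::] -> seqmax s \in s.
Proof.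
case: s => [|y t] // _; have := foldr_max_in y (y :: t).
by rewrite /seqmax /= inE => /orP[/eqP->|]; rewrite // inE eqxx.
Qed.

Lemma seqmax_eq (s : seq R) M : M \in s -> (forall x, x \in s -> x <= M) ->
  seqmax s = M.
Proof.
move=> hM hub; apply/le_anti/andP; split; last exact: seqmax_ub.
apply: hub; apply: seqmax_in; by case: (s) hM.
Qed.

Lemma seqmax_lip1 (I : eqType) (r : seq I) (f g : I -> R) del :
  r != [::] -> (forall i, `|f i - g i| <= del) ->
  seqmax (map f r) - seqmax (map g r) <= del.
Proof.
move=> r0 h.
have : seqmax (map f r) \in map f r by apply: seqmax_in; case: r r0.
case/mapP => i ir ->.
have h1 := seqmax_ub (map_f g ir).
have := le_trans (ler_norm _) (h i); lra.
Qed.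

Lemma seqmax_lip (I : eqType) (r : seq I) (f g : I -> R) del :
  r != [::] -> (forall i, `|f i - g i| <= del) ->
  `|seqmax (map f r) - seqmax (map g r)| <= del.
Proof.
move=> r0 h; rewrite ler_norml; apply/andP; split.
  rewrite lerNl opprB; apply: seqmax_lip1 => // i; by rewrite distrC.
exact: seqmax_lip1.
Qed.

Variable pa : nat -> {poly R}.
Hypothesis hp : forall (a : nat) (x y : R), 0 <= x <= 1 -> 0 <= y <= 1 ->
          `|m_alpha pa a x y - Num.max x y| <= 2 ^- a.

Lemma tree_err a d : forall fuel (s : seq R), (0 < size s)%N -> (size s <= fuel)%N ->
  (size s <= 2 ^ d)%N ->
  (forall x, x \in s -> (d%:R - 1) * 2 ^- a <= x <= 1 - (d%:R - 1) * 2 ^- a) ->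
  `|Mtree pa a fuel s - seqmax s| <= d%:R * 2 ^- a.
Proof.
have e0 : 0 < 2 ^- a :> R by rewrite invr_gt0 exprn_gt0.
have single : forall fuel (y : R), Mtree pa a fuel [:: y] = y.
  by move=> [|f] y.
have dge0 : 0 <= d%:R * 2 ^- a :> R by apply: mulr_ge0 => //; exact: ltW.
elim: d dge0 => [|d IH] dge0 fuel s hs hf hd hr.
  case: s hs hd hr {hf} => [|y [|z t]] //= _ _ _.
  by rewrite single /seqmax /= maxxx subrr normr0.
case: fuel hf => [|f] hf; first by move: hs hf; case: s {hd hr}.
rewrite /=; case: ifP => hs1.
  case: s hs hs1 {hd hr hf} => [|y [|z t]] //= _ _.
  by rewrite /seqmax /= maxxx subrr normr0.
have h2 : (1 < size s)%N by rewrite ltnNge hs1.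
set h := (size s)./2.
have hh : h = (size s %/ 2)%N by rewrite divn2.
have hexp : (2 ^ d.+1 = 2 * 2 ^ d)%N by rewrite expnS.
set P := (2 ^ d)%N in hexp.
have sz1 : size (take h s) = h by rewrite size_take; case: ifP => //; lia.
have sz2 : size (drop h s) = (size s - h)%N by rewrite size_drop.
have dge0' : 0 <= d%:R * 2 ^- a :> R by apply: mulr_ge0 => //; exact: ltW.
have hr' : forall x, x \in s -> (d%:R - 1) * 2 ^- a <= x <= 1 - (d%:R - 1) * 2 ^- a.
  move=> x /hr; rewrite -natr1.
  have : 0 <= 2 ^- a :> R := ltW e0.
  move=> ? /andP[? ?]; apply/andP; split; lra.
have hr2 : forall x, x \in s -> d%:R * 2 ^- a <= x <= 1 - d%:R * 2 ^- a.
  by move=> x /hr; rewrite -natr1 addrK.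
have E1 := IH dge0' f (take h s).
have E2 := IH dge0' f (drop h s).
rewrite sz1 in E1; rewrite sz2 in E2.
have {E1} E1 := E1 ltac:(lia) ltac:(lia) ltac:(lia)
   (fun x hx => hr' x (mem_take hx)).
have {E2} E2 := E2 ltac:(lia) ltac:(lia) ltac:(lia)
   (fun x hx => hr' x (mem_drop hx)).
set u := Mtree pa a f (take h s) in E1 *.
set v := Mtree pa a f (drop h s) in E2 *.
set M1 := seqmax (take h s) in E1.
set M2 := seqmax (drop h s) in E2.
have M1in : M1 \in s.
  apply: (@mem_take h); apply: seqmax_in; rewrite -size_eq0 sz1; apply/eqP; lia.
have M2in : M2 \in s.
  apply: (@mem_drop h); apply: seqmax_in; rewrite -size_eq0 sz2; apply/eqP; lia.
have hu : 0 <= u <= 1.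
  move: (hr2 _ M1in) E1; rewrite ler_norml => /andP[? ?] /andP[? ?].
  apply/andP; split; lra.
have hv : 0 <= v <= 1.
  move: (hr2 _ M2in) E2; rewrite ler_norml => /andP[? ?] /andP[? ?].
  apply/andP; split; lra.
have Hm := @hp a u v hu hv.
have Hmax := max_lip E1 E2.
have -> : seqmax s = Num.max M1 M2.
  apply: seqmax_eq; first by rewrite maxEle; case: ifP.
  move=> x; rewrite -(cat_take_drop h s) mem_cat => /orP[] hx; rewrite le_max.
    by rewrite seqmax_ub.
  by rewrite (seqmax_ub hx) orbT.
have -> : m_alpha pa a u v - Num.max M1 M2 =
  (m_alpha pa a u v - Num.max u v) + (Num.max u v - Num.max M1 M2) by ring.
apply: le_trans (ler_normD _ _) _.
rewrite -natr1 mulrDl mul1r addrC; exact: lerD.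
Qed.

End U.


Section V.
Variable R : realType.
Variable pa : nat -> {poly R}.
Hypothesis hp : forall (a : nat) (x y : R), 0 <= x <= 1 -> 0 <= y <= 1 ->
          `|m_alpha pa a x y - Num.max x y| <= 2 ^- a.
Variable B : R.
Hypothesis hB : 1 < B.

Lemma e_le' a : (4 <= a)%N -> 2 ^- a <= 16^-1 :> R.
Proof.
move=> a4; rewrite -exprVn.
have -> : 16^-1 = (2^-1)^+4 :> R by rewrite !exprS expr0 mulr1 -!invfM; congr (_^-1); ring.
apply: ler_wiXn2l => //; lra.
Qed.

Lemma pool_bnd p q k0 (hk : (0 < k0 <= 10)%N) (w : 'I_q -> 'I_(k0 ^ 2) -> 'I_p) :
  exists K E, bnd K E (basic_eval (BMaxPool R hk w))
   (fun a => basic_approx pa a B (BMaxPool R hk w)) (basic_ok B (BMaxPool R hk w))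
   (fun a => basic_ok B (BMaxPool R hk w)).
Proof.
have B0 : 0 < B by apply: lt_trans hB.
exists 1, (56 * B); split; [exact: ler01| by apply: mulr_ge0 => //; exact: ltW|].
move=> a a4 x x' /= ok ok'.
have e0 : 0 < 2 ^- a :> R by rewrite invr_gt0 exprn_gt0.
have e16 := e_le' a4.
set e := 2 ^- a in e0 e16 *.
set d := normInf (x' - x).
have d0 : 0 <= d by apply: normInf_ge0.
apply: normInf_le; first by rewrite mul1r; apply: addr_ge0 => //; rewrite !mulr_ge0 // ltW.
move=> j; rewrite !mxE /Mt_alpha.
set L := up_log 2 (k0 ^ 2).
have L7 : (L <= 7)%N.
  apply: up_log_min => //; have /andP[_ hk10] := hk; rewrite expnS expn1.
  have : (k0 * k0 <= 10 * 10)%N by apply: leq_mul.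
  move=> h; apply: leq_trans h _; done.
have L7r : L%:R <= 7 :> R by rewrite (ler_nat R L 7).
have L0r : 0 <= L%:R :> R by apply: ler0n.
set D := 2^-1 - (L%:R - 1) * e.
have D8 : 8^-1 <= D.
  rewrite /D.
  have : (L%:R - 1) * e <= 6 * 16^-1.
    apply: le_trans (_ : 6 * e <= _); last by apply: ler_wpM2l => //; lra.
    apply: ler_wpM2r; [exact: ltW|lra].
  lra.
have D0 : 0 < D by apply: lt_le_trans D8; rewrite invr_gt0; lra.
set B' := B / D.
have B'0 : 0 < B' by apply: divr_gt0.
have B'8 : B' <= 8 * B.
  rewrite /B' ler_pdivrMr //.
  have : B * (8 * D - 1) >= 0.
    apply: mulr_ge0; first exact: ltW.
    lra.
  move=> h; nra.
set W' := window w x' j.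
set W := window w x j.
have szW' : size W' = (k0 ^ 2)%N by rewrite /W' /window size_map size_enum_ord.
have k0pos : (0 < k0 ^ 2)%N by have /andP[h _] := hk; rewrite expn_gt0 h.
have W'0 : W' != [::] by rewrite -size_eq0 szW' -lt0n.
set s' := [seq y / B' + 2^-1 | y <- W'].
have szs' : size s' = (k0 ^ 2)%N by rewrite size_map.
have Ms' : seqmax s' = seqmax W' / B' + 2^-1.
  apply: seqmax_eq; first exact/map_f/seqmax_in.
  move=> y /mapP[z zin ->]; rewrite lerD2r ler_pM2r ?invr_gt0 //.
  exact: seqmax_ub.
have Wb : forall y, y \in W' -> `|y| <= B.
  move=> y /mapP[i _ ->]; apply: le_trans (normInf_coord _ _) ok'.
have tr := @tree_err R pa hp a L (size s') s' ltac:(by rewrite szs') (leqnn _)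
   ltac:(by rewrite szs'; apply: up_logP).
have {tr} tr : `|Mtree pa a (size s') s' - seqmax s'| <= L%:R * e.
  apply: tr => z /mapP[y yin ->].
  have hy := Wb y yin.
  have -> : y / B' = (y / B) * D by rewrite /B' invf_div mulrA mulrAC.
  have : `|y / B| <= 1.
    by rewrite normrM normfV (gtr0_norm B0) ler_pdivrMr // mul1r.
  rewrite ler_norml => /andP[h1 h2].
  have : - D <= y / B * D <= D.
    apply/andP; split; nra.
  have hD : D = 2^-1 - (L%:R - 1) * e by [].
  move: hD; set t := y / B * D; set c := (L%:R - 1) * e => hD /andP[h3 h4].
  apply/andP; split; lra.
have -> : B' * (M_alpha pa a s' - 2^-1) - seqmax W =
  B' * (Mtree pa a (size s') s' - seqmax s') + (seqmax W' - seqmax W).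
  rewrite Ms' /M_alpha; field; exact: lt0r_neq0.
apply: le_trans (ler_normD _ _) _.
rewrite mul1r addrC; apply: lerD.
  apply: seqmax_lip; first by rewrite -size_eq0 size_enum_ord -lt0n.
  move=> i; exact: normInf_sub.
rewrite normrM (gtr0_norm B'0).
apply: le_trans (_ : 8 * B * (7 * e) <= _); last by rewrite mulrA -[8 * B * 7]mulrC !mulrA; lra.
apply: (ler_pM (ltW B'0) (normr_ge0 _) B'8).
apply: le_trans tr _; apply: ler_wpM2r; [exact: ltW|done].
Qed.

End V.


Section W.
Variable R : realType.
Variable pa : nat -> {poly R}.
Hypothesis hp : forall (a : nat) (x y : R), 0 <= x <= 1 -> 0 <= y <= 1 ->
          `|m_alpha pa a x y - Num.max x y| <= 2 ^- a.
Variable B : R.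
Hypothesis hB : 1 < B.

Lemma basic_bnd m n (b : basic R m n) : exists K E, bnd K E (basic_eval b)
   (fun a => basic_approx pa a B b) (basic_ok B b) (fun a => basic_ok B b).
Proof.
case: b => [m' n' A c|n'|p q k0 hk w|n'].
- exact: lin_bnd.
- exact: relu_bnd.
- exact: pool_bnd.
- exact: softmax_bnd.
Qed.

Lemma block_bnd m n (b : block R m n) : exists K E, bnd K E (block_eval b)
   (fun a => block_approx pa a B b) (block_ok_exact B b) (fun a => block_ok_approx pa a B b).
Proof.
case: b => [m' n' b|m' n' G P].
  have [K [E [K0 E0 h]]] := basic_bnd b.
  by exists K, E; split.
have [K [E [K0 E0 h]]] := @chain_bnd R (basic R) (@basic_eval R) (fun a => @basic_approx R pa a B)
   (@basic_ok R B) (fun _ => @basic_ok R B) basic_bnd _ _ G.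
exists (K + Kmat P), E; split => //; first by apply: addr_ge0 => //; exact: Kmat_ge0.
move=> a a4 x x' /= ok ok'.
have -> : chain_eval (basic_approx pa a B) G x' + P *m x' - (chain_eval (@basic_eval R) G x + P *m x)
  = (chain_eval (basic_approx pa a B) G x' - chain_eval (@basic_eval R) G x) + P *m (x' - x).
  by rewrite mulmxBr opprD addrACA.
apply: le_trans (normInf_add _ _) _.
have h1 := h a a4 x x' ok ok'.
have h2 := normInf_mul P (x' - x).
rewrite mulrDl -addrA [Kmat P * _ + _]addrC addrA; exact: lerD.
Qed.

End W.

Unset Implicit Arguments.

Theorem theorem5 (R : realType) (pa : nat -> {poly R})
  (hp : forall (a : nat) (x y : R), 0 <= x <= 1 -> 0 <= y <= 1 ->
          `|m_alpha pa a x y - Num.max x y| <= 2 ^- a)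
  (B : R) (hB : 1 < B) (m n : nat) (F : model R m n) :
  exists C : R, forall a : nat, (4 <= a)%N ->
    forall x : 'cV[R]_m,
      inputs_bounded_exact B F x ->
      inputs_bounded_approx pa a B F x ->
      normInf (model_approx pa a B F x - model_eval F x) <= C * 2 ^- a.
Proof.
have [K [E [K0 E0 h]]] := @chain_bnd R (block R) (@block_eval R) (fun a => @block_approx R pa a B)
   (@block_ok_exact R B) (fun a => @block_ok_approx R pa a B) (block_bnd hp hB) _ _ F.
exists E => a a4 x h1 h2.
have := h a a4 x x h1 h2.
have z : normInf (x - x) <= 0.
  by apply: normInf_le => // i; rewrite subrr mxE normr0.
move=> H; apply: le_trans H _.
rewrite -[X in _ <= X]add0r lerD2r -(mulr0 K).
exact: ler_wpM2l.
Qed.
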